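(* The reductions $\to_w$ and $\to_{w\neg gcv} := \to_{wm}\cup\to_{we}$ of the silly substitution calculus are confluent.
   Context: Terms: $t,u,s ::= x \mid \lambda x.t \mid t\,u \mid t[x\backslash u]$, where $t[x\backslash u]$ is an explicit substitution binding $x$ in $t$; terms up to $\alpha$-renaming; $\mathrm{fv}(t[x\backslash u]) = (\mathrm{fv}(t)\setminus\{x\})\cup \mathrm{fv}(u)$. Values: $v ::= \lambda x.t$. Substitution contexts: $S ::= \langle\cdot\rangle \mid S[x\backslash u]$. Weak contexts: $W ::= \langle\cdot\rangle \mid W\,t \mid t\,W \mid t[x\backslash W] \mid W[x\backslash u]$. $W\langle\langle t\rangle\rangle$ denotes plugging $t$ in $W$ where $W$ does not capture free variables of $t$. Root rules: $S\langle \lambda x.t\rangle u \mapsto_m S\langle t[x\backslash u]\rangle$; $W\langle\langle x\rangle\rangle[x\backslash u] \mapsto_{e} W\langle\langle u\rangle\rangle[x\backslash u]$ ($W$ weak context); $t[x\backslash S\langle v\rangle] \mapsto_{gcv} S\langle t\rangle$ if $x\notin\mathrm{fv}(t)$. $\to_{wm},\to_{we},\to_{wgcv}$ are their closures under weak contexts; $\to_w$ is their union. A relation $\to$ is confluent if whenever $t\to^* u_1$ and $t\to^* u_2$ there is $s$ with $u_1\to^* s$ and $u_2\to^* s$. *)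

(* Defs.v *)
(* Silly substitution calculus (weak), terms in de Bruijn
   representation (= terms up to alpha-renaming). *)
From Stdlib Require Import Arith List Relations.
Import ListNotations.

(* t ::= x | \x.t | t u | t[x\u]; in [ES t u] (= t[x\u]) the body t is
   under one binder (index 0 = x), u is not. *)
Inductive term : Type :=
| Var : nat -> term
| Lam : term -> term
| App : term -> term -> term
| ES  : term -> term -> term.

Fixpoint lift (k c : nat) (t : term) : term :=
  match t with
  | Var n => if n <? c then Var n else Var (n + k)
  | Lam b => Lam (lift k (S c) b)
  | App t1 t2 => App (lift k c t1) (lift k c t2)
  | ES t1 t2 => ES (lift k (S c) t1) (lift k c t2)
  end.

(* Substitution contexts S ::= <.> | S[x\u].  A list [u1; ...; un] (head =
   outermost) denotes <.>[x_n\u_n]...[x_1\u_1]. *)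
Definition sctx := list term.

Fixpoint plugS (s : sctx) (t : term) : term :=
  match s with
  | nil => t
  | u :: s' => ES (plugS s' t) u
  end.

Inductive wctx : Type :=
| Hole : wctx
| WAppL : wctx -> term -> wctx
| WAppR : term -> wctx -> wctx
| WESR : term -> wctx -> wctx
| WESL : wctx -> term -> wctx.

Fixpoint plugW (w : wctx) (t : term) : term :=
  match w with
  | Hole => t
  | WAppL w' u => App (plugW w' t) u
  | WAppR u w' => App u (plugW w' t)
  | WESR u w' => ES u (plugW w' t)
  | WESL w' u => ES (plugW w' t) u
  end.

Fixpoint depth (w : wctx) : nat :=
  match w with
  | Hole => 0
  | WAppL w' _ => depth w'
  | WAppR _ w' => depth w'
  | WESR _ w' => depth w'
  | WESL w' _ => S (depth w')
  end.

(* S<\x.t> u  |->m  S<t[x\u]>   (u is moved under the binders of S) *)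
Inductive root_m : term -> term -> Prop :=
| RootM : forall (s : sctx) (t u : term),
    root_m (App (plugS s (Lam t)) u)
           (plugS s (ES t (lift (length s) 0 u))).

(* W<<x>>[x\u]  |->e  W<<u>>[x\u]   (the occurrence of x is the one bound by
   the explicit substitution, and u is not captured by W) *)
Inductive root_e : term -> term -> Prop :=
| RootE : forall (w : wctx) (u : term),
    root_e (ES (plugW w (Var (depth w))) u)
           (ES (plugW w (lift (S (depth w)) 0 u)) u).

(* t[x\S<v>]  |->gcv  S<t>  if x notin fv(t).  "x notin fv(t)" is expressed
   as t = lift 1 0 t0 (t0 is t with x removed from its scope). *)
Inductive root_gcv : term -> term -> Prop :=
| RootGcv : forall (s : sctx) (t0 b : term),
    root_gcv (ES (lift 1 0 t0) (plugS s (Lam b)))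
             (plugS s (lift (length s) 0 t0)).

Inductive wclos (R : term -> term -> Prop) : term -> term -> Prop :=
| WClos : forall (w : wctx) (t t' : term),
    R t t' -> wclos R (plugW w t) (plugW w t').

Definition step_wm := wclos root_m.
Definition step_we := wclos root_e.
Definition step_wgcv := wclos root_gcv.

Definition step_w (t t' : term) : Prop :=
  step_wm t t' \/ step_we t t' \/ step_wgcv t t'.

Definition step_wngcv (t t' : term) : Prop :=
  step_wm t t' \/ step_we t t'.

Definition confluent (R : term -> term -> Prop) : Prop :=
  forall t u1 u2,
    clos_refl_trans term R t u1 -> clos_refl_trans term R t u2 ->
    exists s, clos_refl_trans term R u1 s /\ clos_refl_trans term R u2 s.

(* Main.v *)
Require Import Defs.
From Stdlib Require Import Arith List Relations Lia.
Import ListNotations.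

Definition up (f : nat -> nat) : nat -> nat :=
  fun n => match n with 0 => 0 | S m => S (f m) end.

Fixpoint ren (f : nat -> nat) (t : term) : term :=
  match t with
  | Var n => Var (f n)
  | Lam b => Lam (ren (up f) b)
  | App a b => App (ren f a) (ren f b)
  | ES a b => ES (ren (up f) a) (ren f b)
  end.

Fixpoint occurs (n : nat) (t : term) : Prop :=
  match t with
  | Var m => m = n
  | Lam b => occurs (S n) b
  | App a b => occurs n a \/ occurs n b
  | ES a b => occurs (S n) a \/ occurs n b
  end.

Lemma ren_ext_occ : forall t f g, (forall n, occurs n t -> f n = g n) -> ren f t = ren g t.
Proof.
  induction t; intros f g H; simpl in *.
  - rewrite H; auto.
  - f_equal. apply IHt. intros [|n] Hn; simpl; auto.
  - f_equal; auto.
  - f_equal; [apply IHt1|apply IHt2]; auto. intros [|n] Hn; simpl; auto.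
Qed.

Lemma ren_ext : forall t f g, (forall n, f n = g n) -> ren f t = ren g t.
Proof. intros; apply ren_ext_occ; auto. Qed.

Lemma ren_comp : forall t f g, ren f (ren g t) = ren (fun n => f (g n)) t.
Proof.
  induction t; intros f g; simpl; f_equal; auto;
  try (rewrite IHt || rewrite IHt1); try apply ren_ext; try (intros [|n]; reflexivity).
Qed.

Lemma ren_id : forall t, ren (fun n => n) t = t.
Proof.
  induction t; simpl; f_equal; auto;
  try (rewrite <- IHt at 2 || rewrite <- IHt1 at 2); try apply ren_ext; intros [|n]; reflexivity.
Qed.

Lemma lift_ren : forall t k c, lift k c t = ren (fun n => if n <? c then n else n + k) t.
Proof.
  induction t; intros k c; simpl.
  - destruct (n <? c); auto.
  - f_equal. rewrite IHt. apply ren_ext; intros [|n]; simpl; auto. change (S n <? S c) with (n <? c). destruct (n <? c); auto.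
  - f_equal; auto.
  - f_equal; auto. rewrite IHt1. apply ren_ext; intros [|n]; simpl; auto. change (S n <? S c) with (n <? c). destruct (n <? c); auto.
Qed.

Lemma lift0_ren : forall t k, lift k 0 t = ren (fun n => k + n) t.
Proof. intros; rewrite lift_ren; apply ren_ext; intros; simpl; lia. Qed.

Lemma occurs_ren : forall t n f, occurs n (ren f t) -> exists m, occurs m t /\ f m = n.
Proof.
  induction t; intros k f H; simpl in *.
  - eauto.
  - destruct (IHt _ _ H) as [[|m] [Hm E]]; simpl in E; try discriminate.
    injection E; intros; subst; eauto.
  - destruct H as [H|H]; [destruct (IHt1 _ _ H) as [m [? ?]]|destruct (IHt2 _ _ H) as [m [? ?]]]; eauto.
  - destruct H as [H|H].
    + destruct (IHt1 _ _ H) as [[|m] [Hm E]]; simpl in E; try discriminate.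
      injection E; intros; subst; eauto.
    + destruct (IHt2 _ _ H) as [m [? ?]]; eauto.
Qed.

Lemma occurs_ren2 : forall t m f, occurs m t -> occurs (f m) (ren f t).
Proof.
  induction t; intros k f H; simpl in *.
  - subst; auto.
  - apply (IHt (S k) (up f) H).
  - destruct H; auto.
  - destruct H; [left; apply (IHt1 (S k) (up f) H)| right; auto].
Qed.

Fixpoint upn (n : nat) (f : nat -> nat) : nat -> nat :=
  match n with 0 => f | S n => upn n (up f) end.

Lemma upn_spec : forall n f m, upn n f m = if m <? n then m else n + f (m - n).
Proof.
  induction n; intros f m; simpl.
  - rewrite Nat.sub_0_r; destruct m; auto.
  - rewrite IHn. destruct (Nat.ltb_spec m n); destruct (Nat.ltb_spec m (S n)); try lia; auto.
    + assert (m = n) by lia; subst. rewrite Nat.sub_diag; simpl; lia.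
    + replace (m - n) with (S (m - S n)) by lia. simpl; lia.
Qed.

Fixpoint rens (f : nat -> nat) (s : sctx) : sctx :=
  match s with nil => nil | u :: s' => ren f u :: rens (up f) s' end.

Lemma rens_length : forall s f, length (rens f s) = length s.
Proof. induction s; simpl; auto. Qed.

Lemma ren_plugS : forall s f t, ren f (plugS s t) = plugS (rens f s) (ren (upn (length s) f) t).
Proof. induction s; intros f t; simpl; auto. rewrite IHs; auto. Qed.

Lemma plugS_app : forall s1 s2 t, plugS (s1 ++ s2) t = plugS s1 (plugS s2 t).
Proof. induction s1; simpl; intros; auto. rewrite IHs1; auto. Qed.

Lemma plugS_lam_inj : forall s1 s2 t1 t2, plugS s1 (Lam t1) = plugS s2 (Lam t2) -> s1 = s2 /\ t1 = t2.
Proof.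
  induction s1; destruct s2; simpl; intros t1 t2 H; try discriminate.
  - injection H; auto.
  - injection H; intros; subst. destruct (IHs1 _ _ _ H1); subst; auto.
Qed.

Lemma occurs_plugS_in : forall s k X, occurs (k + length s) X -> occurs k (plugS s X).
Proof.
  induction s; simpl; intros k X H.
  - rewrite Nat.add_0_r in H; auto.
  - left. apply IHs. replace (S k + length s) with (k + S (length s)) by lia; auto.
Qed.

Lemma occurs_plugS_out : forall s k X Y, occurs k (plugS s X) -> occurs k (plugS s Y) \/ occurs (k + length s) X.
Proof.
  induction s; simpl; intros k X Y H.
  - rewrite Nat.add_0_r; auto.
  - destruct H as [H|H]; auto.
    destruct (IHs _ _ Y H); auto. right. replace (k + S (length s)) with (S k + length s) by lia; auto.
Qed.
Inductive occ1 : nat -> term -> term -> term -> Prop :=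
| O_var k r : occ1 k r (Var k) r
| O_appl k r a a' b : occ1 k r a a' -> occ1 k r (App a b) (App a' b)
| O_appr k r a b b' : occ1 k r b b' -> occ1 k r (App a b) (App a b')
| O_esl k r t t' u : occ1 (S k) (ren S r) t t' -> occ1 k r (ES t u) (ES t' u)
| O_esr k r t u u' : occ1 k r u u' -> occ1 k r (ES t u) (ES t u').

Inductive kind := Km | Ke | Kg.
Definition hg (n : nat) : nat -> nat := fun m => n + pred m.

Inductive root : kind -> term -> term -> Prop :=
| R_m s t u : root Km (App (plugS s (Lam t)) u) (plugS s (ES t (ren (fun n => length s + n) u)))
| R_e t t' u : occ1 0 (ren S u) t t' -> root Ke (ES t u) (ES t' u)
| R_g s b T : ~ occurs 0 T -> root Kg (ES T (plugS s (Lam b))) (plugS s (ren (hg (length s)) T)).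

Inductive cc (k : kind) : term -> term -> Prop :=
| cc_root t t' : root k t t' -> cc k t t'
| cc_appl a a' b : cc k a a' -> cc k (App a b) (App a' b)
| cc_appr a b b' : cc k b b' -> cc k (App a b) (App a b')
| cc_esl a a' b : cc k a a' -> cc k (ES a b) (ES a' b)
| cc_esr a b b' : cc k b b' -> cc k (ES a b) (ES a b').

Lemma ren_upS : forall r f, ren (up f) (ren S r) = ren S (ren f r).
Proof. intros; rewrite !ren_comp; apply ren_ext; reflexivity. Qed.

Lemma occ1_occurs : forall k r T T', occ1 k r T T' -> occurs k T.
Proof. induction 1; simpl; auto. Qed.

Lemma occ1_occurs_back : forall k r T T', occ1 k r T T' -> forall n, occurs n T' -> occurs n T \/ occurs n r.
Proof.
  induction 1; simpl; intros n H0; auto.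
  - destruct H0 as [H0|H0]; auto. destruct (IHocc1 _ H0); auto.
  - destruct H0 as [H0|H0]; auto. destruct (IHocc1 _ H0); auto.
  - destruct H0 as [H0|H0]; auto. destruct (IHocc1 _ H0); auto.
    destruct (occurs_ren _ _ _ H1) as [m [Hm E]]. injection E; intros; subst; auto.
  - destruct H0 as [H0|H0]; auto. destruct (IHocc1 _ H0); auto.
Qed.

Lemma occ1_ren : forall k r T T', occ1 k r T T' -> forall f, occ1 (f k) (ren f r) (ren f T) (ren f T').
Proof.
  induction 1; intros f; simpl; try constructor; auto.
  specialize (IHocc1 (up f)). rewrite ren_upS in IHocc1. exact IHocc1.
Qed.

Lemma root_ren : forall k t t', root k t t' -> forall f, root k (ren f t) (ren f t').
Proof.
  destruct 1; intros f.
  - simpl. rewrite !ren_plugS. simpl.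
    replace (ren (upn (length s) f) (ren (fun n => length s + n) u))
      with (ren (fun n => length (rens f s) + n) (ren f u)).
    + apply R_m.
    + rewrite !ren_comp, rens_length. apply ren_ext. intros n. rewrite upn_spec.
      destruct (Nat.ltb_spec (length s + n) (length s)); try lia. f_equal; f_equal; lia.
  - simpl. constructor. apply (occ1_ren _ _ _ _ H (up f)) || (rewrite <- ren_upS; apply (occ1_ren _ _ _ _ H (up f))).
  - simpl. rewrite !ren_plugS. simpl.
    replace (ren (upn (length s) f) (ren (hg (length s)) T))
      with (ren (hg (length (rens f s))) (ren (up f) T)).
    + apply R_g. intro Hc. destruct (occurs_ren _ _ _ Hc) as [[|m] [Hm E]]; simpl in E; try discriminate; auto.
    + rewrite !ren_comp, rens_length. apply ren_ext_occ. intros [|n] Hn; [contradiction|].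
      rewrite upn_spec. unfold hg; simpl.
      destruct (Nat.ltb_spec (length s + n) (length s)); try lia. f_equal; f_equal; lia.
Qed.

Lemma cc_ren : forall k t t', cc k t t' -> forall f, cc k (ren f t) (ren f t').
Proof.
  induction 1; intros f; simpl.
  - constructor; apply root_ren; auto.
  - apply cc_appl; auto.
  - apply cc_appr; auto.
  - apply cc_esl; auto.
  - apply cc_esr; auto.
Qed.

Lemma root_occurs_back : forall k t t', root k t t' -> forall n, occurs n t' -> occurs n t.
Proof.
  destruct 1; intros n Hn.
  - simpl. destruct (occurs_plugS_out _ _ _ (Lam t) Hn) as [H|H]; auto.
    simpl in H. destruct H as [H|H].
    + left. apply occurs_plugS_in. simpl. replace (S (n + length s)) with (n + length s + 1) in H by lia.
      replace (S (n + length s)) with (n + length s + 1) by lia. auto.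
    + right. destruct (occurs_ren _ _ _ H) as [m [Hm E]]. assert (m = n) by lia. subst; auto.
  - simpl in *. destruct Hn as [Hn|Hn]; auto.
    destruct (occ1_occurs_back _ _ _ _ H _ Hn); auto.
    destruct (occurs_ren _ _ _ H0) as [m [Hm E]]. injection E; intros; subst; auto.
  - simpl. destruct (occurs_plugS_out _ _ _ (Lam b) Hn) as [H0|H0]; auto.
    destruct (occurs_ren _ _ _ H0) as [[|m] [Hm E]]; [contradiction|].
    unfold hg in E; simpl in E. assert (m = n) by lia. subst; auto.
Qed.

Lemma cc_occurs_back : forall k t t', cc k t t' -> forall n, occurs n t' -> occurs n t.
Proof.
  induction 1; simpl; intros n Hn; try (destruct Hn; auto; fail).
  eapply root_occurs_back; eauto.
Qed.

Lemma cc_plugS : forall k s X X', cc k X X' -> cc k (plugS s X) (plugS s X').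
Proof. induction s; simpl; intros; auto. apply cc_esl; auto. Qed.

Lemma cc_plugW : forall k w X X', cc k X X' -> cc k (plugW w X) (plugW w X').
Proof. induction w; simpl; intros; auto;
  solve [apply cc_appl; auto | apply cc_appr; auto | apply cc_esl; auto | apply cc_esr; auto]. Qed.
Lemma ren_plus_S : forall r d, ren (fun n => d + n) (ren S r) = ren (fun n => S d + n) r.
Proof. intros; rewrite ren_comp; apply ren_ext; intros; lia. Qed.

Lemma occ1_plugW_fw : forall k r T T', occ1 k r T T' ->
  exists w, T = plugW w (Var (k + depth w)) /\ T' = plugW w (ren (fun n => depth w + n) r).
Proof.
  induction 1.
  - exists Hole; simpl. rewrite Nat.add_0_r. split; auto. symmetry. rewrite <- (ren_id r) at 2. apply ren_ext; auto.
  - destruct IHocc1 as [w [E1 E2]]; subst. exists (WAppL w b); simpl; auto.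
  - destruct IHocc1 as [w [E1 E2]]; subst. exists (WAppR a w); simpl; auto.
  - destruct IHocc1 as [w [E1 E2]]; subst. exists (WESL w u); simpl.
    rewrite ren_plus_S. split; auto. repeat f_equal. lia.
  - destruct IHocc1 as [w [E1 E2]]; subst. exists (WESR t w); simpl; auto.
Qed.

Lemma occ1_plugW_bw : forall w k r, occ1 k r (plugW w (Var (k + depth w))) (plugW w (ren (fun n => depth w + n) r)).
Proof.
  induction w; intros k r; simpl.
  - rewrite Nat.add_0_r. replace (ren (fun n => n) r) with r by (symmetry; apply ren_id). constructor.
  - constructor; auto.
  - constructor; auto.
  - constructor; auto.
  - constructor. specialize (IHw (S k) (ren S r)). rewrite ren_plus_S in IHw.
    replace (k + S (depth w)) with (S k + depth w) by lia. exact IHw.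
Qed.

Lemma occ_plugS_lam : forall s k r t T', occ1 k r (plugS s (Lam t)) T' ->
  exists s', length s' = length s /\ T' = plugS s' (Lam t) /\ forall X, occ1 k r (plugS s X) (plugS s' X).
Proof.
  induction s; simpl; intros k r t T' H; inversion H; subst.
  - destruct (IHs _ _ _ _ H5) as [s' [L [E F]]]; subst.
    exists (a :: s'); simpl; repeat split; auto. intros; constructor; auto.
  - exists (u' :: s); simpl; repeat split; auto. intros; apply O_esr; auto.
Qed.

Lemma occ_plugS_body : forall s k r X X', occ1 (length s + k) (ren (fun n => length s + n) r) X X' ->
  occ1 k r (plugS s X) (plugS s X').
Proof.
  induction s; simpl; intros k r X X' H.
  - replace (ren (fun n => n) r) with r in H by (symmetry; apply ren_id). auto.
  - constructor. apply IHs. rewrite ren_plus_S. replace (length s + S k) with (S (length s + k)) by lia. auto.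
Qed.

Lemma occ_diamond : forall j r T T1, occ1 j r T T1 -> forall k q T2, occ1 k q T T2 ->
  (j = k /\ (r = q -> T1 = T2)) \/ exists T3, occ1 k q T1 T3 /\ occ1 j r T2 T3.
Proof.
  induction 1; intros k' q T2 H2; inversion H2; subst.
  - left; split; auto.
  - destruct (IHocc1 _ _ _ ltac:(match goal with H: occ1 _ _ _ _ |- _ => exact H end)) as [[E F]|[T3 [A B]]].
    + left; split; auto. intros; subst; f_equal; auto.
    + right; exists (App T3 b); split; constructor; auto.
  - right; exists (App a' b'); split; constructor; auto.
  - right; exists (App a' b'); split; constructor; auto.
  - destruct (IHocc1 _ _ _ ltac:(match goal with H: occ1 _ _ _ _ |- _ => exact H end)) as [[E F]|[T3 [A B]]].
    + left; split; auto. intros; subst; f_equal; auto.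
    + right; exists (App a T3); split; constructor; auto.
  - destruct (IHocc1 _ _ _ ltac:(match goal with H: occ1 _ _ _ _ |- _ => exact H end)) as [[E F]|[T3 [A B]]].
    + left; split; [lia|]. intros; subst; f_equal; auto.
    + right; exists (ES T3 u); split; constructor; auto.
  - right; exists (ES t' u'); split; constructor; auto.
  - right; exists (ES t' u'); split; constructor; auto.
  - destruct (IHocc1 _ _ _ ltac:(match goal with H: occ1 _ _ _ _ |- _ => exact H end)) as [[E F]|[T3 [A B]]].
    + left; split; auto. intros; subst; f_equal; auto.
    + right; exists (ES t T3); split; constructor; auto.
Qed.

Lemma occ1_nested : forall k r T T1, occ1 k r T T1 -> forall j q r', occ1 j q r r' ->
  exists T2, occ1 k r' T T2 /\ occ1 j q T1 T2.
Proof.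
  induction 1; intros j q r' Hr.
  - exists r'; split; auto. constructor.
  - destruct (IHocc1 _ _ _ Hr) as [T2 [A B]]. exists (App T2 b); split; constructor; auto.
  - destruct (IHocc1 _ _ _ Hr) as [T2 [A B]]. exists (App a T2); split; constructor; auto.
  - destruct (IHocc1 _ _ _ (occ1_ren _ _ _ _ Hr S)) as [T2 [A B]]. exists (ES T2 u); split; constructor; auto.
  - destruct (IHocc1 _ _ _ Hr) as [T2 [A B]]. exists (ES t T2); split; constructor; auto.
Qed.

Lemma occ1_cc : forall k r T T1, occ1 k r T T1 -> forall kd r', cc kd r r' ->
  exists T2, occ1 k r' T T2 /\ cc kd T1 T2.
Proof.
  induction 1; intros kd r' Hr.
  - exists r'; split; auto. constructor.
  - destruct (IHocc1 _ _ Hr) as [T2 [A B]]. exists (App T2 b); split; [constructor|apply cc_appl]; auto.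
  - destruct (IHocc1 _ _ Hr) as [T2 [A B]]. exists (App a T2); split; [constructor|apply cc_appr]; auto.
  - destruct (IHocc1 _ _ (cc_ren _ _ _ Hr S)) as [T2 [A B]]. exists (ES T2 u); split; [constructor|apply cc_esl]; auto.
  - destruct (IHocc1 _ _ Hr) as [T2 [A B]]. exists (ES t T2); split; [constructor|apply cc_esr]; auto.
Qed.
Lemma L_gen : forall k s t r, cc k (plugS s (Lam t)) r ->
  exists s' g, r = plugS s' (ren g (Lam t)) /\ (forall n, g (length s + n) = length s' + n) /\
    forall X, (forall n, occurs n X -> n < length s -> occurs n (Lam t)) ->
      cc k (plugS s X) (plugS s' (ren g X)).
Proof.
  induction s as [|a s0 IH]; intros t r H; cbn [plugS length] in *.
  - inversion H; subst. inversion H0.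
  - inversion H; subst.
    + inversion H0; subst.
      * match goal with Hx : occ1 _ _ _ _ |- _ => destruct (occ_plugS_lam _ _ _ _ _ Hx) as [s0' [L [E F]]] end; subst.
        exists (a :: s0'), (fun n => n). cbn [plugS length]. rewrite ren_id. split; [reflexivity|split].
        -- intros; cbn [length]; rewrite L; lia.
        -- intros X _. rewrite ren_id. constructor. constructor. apply F.
      * match goal with Hx : ~ occurs 0 _ |- _ => rename Hx into Hn end.
        exists (s ++ rens (hg (length s)) s0), (upn (length s0) (hg (length s))).
        split; [|split].
        -- rewrite ren_plugS, plugS_app. reflexivity.
        -- intros n. rewrite upn_spec, length_app, rens_length.
           destruct (Nat.ltb_spec (S (length s0) + n) (length s0)); try lia.
           unfold hg. replace (S (length s0) + n - length s0) with (S n) by lia. simpl. lia.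
        -- intros X HX. rewrite plugS_app, <- ren_plugS. constructor. constructor.
           intro Hc. destruct (occurs_plugS_out _ _ _ (Lam t) Hc) as [Hc'|Hc']; auto.
           apply Hn. apply occurs_plugS_in. simpl in *. apply HX in Hc'; [|lia]. simpl in Hc'. exact Hc'.
    + match goal with Hx : cc _ (plugS s0 _) _ |- _ => destruct (IH _ _ Hx) as [s0' [g [E [G F]]]] end; subst.
      
      exists (a :: s0'), g. cbn [plugS length]. split; [reflexivity|split].
      * intros n. replace (S (length s0) + n) with (length s0 + S n) by lia. rewrite G. lia.
      * intros X HX. apply cc_esl. apply F. intros n Hn Hl. apply HX; auto; lia.
    + exists (b' :: s0), (fun n => n). cbn [plugS length]. rewrite ren_id. split; [reflexivity|split]; [intros; cbn [length]; lia|].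
      intros X _. rewrite ren_id. apply cc_esr; auto.
Qed.
Inductive star {A : Type} (R : A -> A -> Prop) : A -> A -> Prop :=
| st_refl x : star R x x
| st_step x y z : R x y -> star R y z -> star R x z.

Lemma star_one {A} (R : A -> A -> Prop) x y : R x y -> star R x y.
Proof. intros; econstructor; eauto; constructor. Qed.

Lemma star_trans {A} (R : A -> A -> Prop) x y z : star R x y -> star R y z -> star R x z.
Proof. induction 1; intros; auto. econstructor; eauto. Qed.

Lemma star_map {A B} (R : A -> A -> Prop) (R' : B -> B -> Prop) (f : A -> B) :
  (forall x y, R x y -> R' (f x) (f y)) -> forall x y, star R x y -> star R' (f x) (f y).
Proof. intros Hf x y H; induction H; [constructor|econstructor; eauto]. Qed.

Definition OJ (k : kind) (j : nat) (r : term) : term -> term -> Prop :=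
  match k with Ke => star (occ1 j r) | _ => occ1 j r end.

Lemma OJ_one : forall k j r x y, occ1 j r x y -> OJ k j r x y.
Proof. destruct k; simpl; intros; auto using star_one. Qed.

Lemma OJ_map : forall k j r j' r' (f : term -> term), (forall x y, occ1 j r x y -> occ1 j' r' (f x) (f y)) ->
  forall x y, OJ k j r x y -> OJ k j' r' (f x) (f y).
Proof. destruct k; simpl; intros; auto. apply (star_map (occ1 j r) _ f); auto. Qed.

Lemma ren_hg_S : forall r n, ren (hg n) (ren S r) = ren (fun m => n + m) r.
Proof. intros; rewrite ren_comp; apply ren_ext; intros; reflexivity. Qed.

Lemma L_occ : forall k2 T T2, cc k2 T T2 -> forall j r T', occ1 j r T T' ->
  exists T3, star (cc k2) T' T3 /\ OJ k2 j r T2 T3.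
Proof.
  induction 1; intros j r To Ho.
  - destruct H.
    + inversion Ho; subst.
      * match goal with Hx : occ1 _ _ (plugS _ _) _ |- _ =>
          destruct (occ_plugS_lam _ _ _ _ _ Hx) as [s' [L [E F]]] end; subst.
        exists (plugS s' (ES t (ren (fun n => length s' + n) u))). split.
        -- apply star_one. constructor. constructor.
        -- apply OJ_one. rewrite L. apply F.
      * exists (plugS s (ES t (ren (fun n => length s + n) b'))). split.
        -- apply star_one. constructor. constructor.
        -- apply OJ_one. apply occ_plugS_body. apply O_esr.
           match goal with Hx : occ1 _ _ u _ |- _ => exact (occ1_ren _ _ _ _ Hx (fun n => length s + n)) end.
    + inversion Ho; subst.
      * match goal with Hx : occ1 (S j) _ _ _ |- _ => rename Hx into Hb end.
        destruct (occ_diamond _ _ _ _ Hb _ _ _ H) as [[E _]|[T3 [A B]]]; [discriminate|].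
        exists (ES T3 u). split.
        -- apply star_one. constructor. constructor. auto.
        -- apply star_one. constructor. auto.
      * match goal with Hx : occ1 j r u _ |- _ => rename Hx into Hu end.
        destruct (occ1_nested _ _ _ _ H _ _ _ (occ1_ren _ _ _ _ Hu S)) as [T2' [A B]].
        exists (ES T2' u'). split.
        -- apply star_one. constructor. constructor. auto.
        -- simpl. eapply st_step; [apply O_esr; exact Hu|]. apply star_one. constructor. auto.
    + inversion Ho; subst.
      * match goal with Hx : occ1 (S j) _ _ _ |- _ => rename Hx into Hb end.
        exists (plugS s (ren (hg (length s)) t')). split.
        -- apply star_one. constructor. constructor. intro Hc.
           destruct (occ1_occurs_back _ _ _ _ Hb _ Hc) as [Hc'|Hc']; auto.
           destruct (occurs_ren _ _ _ Hc') as [m [_ E]]; discriminate.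
        -- apply OJ_one. apply occ_plugS_body.
           rewrite <- ren_hg_S. exact (occ1_ren _ _ _ _ Hb (hg (length s))).
      * match goal with Hx : occ1 _ _ (plugS _ _) _ |- _ =>
          destruct (occ_plugS_lam _ _ _ _ _ Hx) as [s' [L [E F]]] end; subst.
        exists (plugS s' (ren (hg (length s')) T)). split.
        -- apply star_one. constructor. constructor. auto.
        -- apply OJ_one. rewrite L. apply F.
  - inversion Ho; subst.
    + match goal with Hx : occ1 _ _ _ _ |- _ => destruct (IHcc _ _ _ Hx) as [T3 [A B]] end. exists (App T3 b). split.
      * apply (star_map (cc k2) _ (fun x => App x b)); auto. intros; apply cc_appl; auto.
      * refine (OJ_map _ _ _ _ _ (fun x => App x b) _ _ _ B); intros; constructor; auto.
    + exists (App a' b'). split.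
      * apply star_one. apply cc_appl; auto.
      * apply OJ_one. constructor; auto.
  - inversion Ho; subst.
    + exists (App a' b'). split.
      * apply star_one. apply cc_appr; auto.
      * apply OJ_one. constructor; auto.
    + match goal with Hx : occ1 _ _ _ _ |- _ => destruct (IHcc _ _ _ Hx) as [T3 [A B]] end. exists (App a T3). split.
      * apply (star_map (cc k2) _ (fun x => App a x)); auto. intros; apply cc_appr; auto.
      * refine (OJ_map _ _ _ _ _ (fun x => App a x) _ _ _ B); intros; constructor; auto.
  - inversion Ho; subst.
    + match goal with Hx : occ1 _ _ _ _ |- _ => destruct (IHcc _ _ _ Hx) as [T3 [A B]] end. exists (ES T3 b). split.
      * apply (star_map (cc k2) _ (fun x => ES x b)); auto. intros; apply cc_esl; auto.
      * refine (OJ_map _ _ _ _ _ (fun x => ES x b) _ _ _ B); intros; constructor; auto.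
    + exists (ES a' u'). split.
      * apply star_one. apply cc_esl; auto.
      * apply OJ_one. constructor; auto.
  - inversion Ho; subst.
    + exists (ES t' b'). split.
      * apply star_one. apply cc_esr; auto.
      * apply OJ_one. constructor; auto.
    + match goal with Hx : occ1 _ _ _ _ |- _ => destruct (IHcc _ _ _ Hx) as [T3 [A B]] end. exists (ES a T3). split.
      * apply (star_map (cc k2) _ (fun x => ES a x)); auto. intros; apply cc_esr; auto.
      * refine (OJ_map _ _ _ _ _ (fun x => ES a x) _ _ _ B); intros; constructor; auto.
Qed.
Definition opt {A : Type} (R : A -> A -> Prop) (x y : A) : Prop := x = y \/ R x y.

Definition J (k1 k2 : kind) : term -> term -> Prop :=
  match k1 with Ke => star (cc k2) | _ => opt (cc k2) end.

Lemma J_refl : forall k1 k2 x, J k1 k2 x x.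
Proof. destruct k1; simpl; intros; try (left; reflexivity); constructor. Qed.

Lemma J_one : forall k1 k2 x y, cc k2 x y -> J k1 k2 x y.
Proof. destruct k1; simpl; intros; try (right; auto); apply star_one; auto. Qed.

Lemma J_map : forall k1 k2 (f : term -> term), (forall x y, cc k2 x y -> cc k2 (f x) (f y)) ->
  forall x y, J k1 k2 x y -> J k1 k2 (f x) (f y).
Proof.
  destruct k1; simpl; intros k2 f Hf x y H;
  try (destruct H as [H|H]; [subst; left; auto|right; auto]).
  apply (star_map (cc k2) _ f); auto.
Qed.

Lemma root_inside : forall k1 a b, root k1 a b -> forall k2 c, cc k2 a c ->
  exists d, J k1 k2 b d /\ J k2 k1 c d.
Proof.
  destruct 1; intros k2 c Hc.
  - inversion Hc; subst.
    + inversion H; subst. destruct (plugS_lam_inj _ _ _ _ H2); subst.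
      exists (plugS s (ES t (ren (fun n => length s + n) u))); split; apply J_refl.
    + match goal with Hx : cc _ (plugS _ _) _ |- _ =>
        destruct (L_gen _ _ _ _ Hx) as [s' [g [E [Hg F]]]] end; subst.
      exists (plugS s' (ES (ren (up g) t) (ren (fun n => length s' + n) u))). split.
      * apply J_one.
        replace (ES (ren (up g) t) (ren (fun n => length s' + n) u))
          with (ren g (ES t (ren (fun n => length s + n) u))).
        -- apply F. intros n Hn Hl. simpl in Hn. destruct Hn as [Hn|Hn]; auto.
           destruct (occurs_ren _ _ _ Hn) as [m [_ E]]; lia.
        -- simpl. f_equal. rewrite ren_comp. apply ren_ext. intros; auto.
      * apply J_one. simpl. constructor. constructor.
    + exists (plugS s (ES t (ren (fun n => length s + n) b'))). split.
      * apply J_one. apply cc_plugS. apply cc_esr. apply cc_ren; auto.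
      * apply J_one. constructor. constructor.
  - inversion Hc; subst.
    + inversion H0; subst.
      * match goal with Hx : occ1 0 _ t _ |- _ => rename Hx into H2 end.
        destruct (occ_diamond _ _ _ _ H _ _ _ H2) as [[_ E]|[T3 [A B]]].
        -- rewrite E by auto. exists (ES t'0 u); split; apply J_refl.
        -- exists (ES T3 u). split; apply J_one; constructor; constructor; auto.
      * exfalso. match goal with Hx : ~ occurs 0 _ |- _ => apply Hx end. eapply occ1_occurs; eauto.
    + match goal with Hx : cc _ t _ |- _ => rename Hx into Ht end.
      destruct (L_occ _ _ _ Ht _ _ _ H) as [T3 [A B]].
      exists (ES T3 u). split.
      * simpl. apply (star_map (cc k2) _ (fun x => ES x u)); auto. intros; apply cc_esl; auto.
      * destruct k2; simpl in B |- *;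
          try (right; constructor; constructor; auto; fail).
        apply (star_map (occ1 0 (ren S u)) _ (fun x => ES x u)); auto. intros; constructor; constructor; auto.
    + match goal with Hx : cc _ u _ |- _ => rename Hx into Hu end.
      destruct (occ1_cc _ _ _ _ H _ _ (cc_ren _ _ _ Hu S)) as [T2 [A B]].
      exists (ES T2 b'). split.
      * simpl. eapply st_step; [apply cc_esl; exact B|]. apply star_one. apply cc_esr; auto.
      * apply J_one. constructor. constructor. auto.
  - inversion Hc; subst.
    + inversion H0; subst.
      * exfalso. apply H. eapply occ1_occurs; eauto.
      * match goal with Hx : plugS _ (Lam _) = plugS _ (Lam _) |- _ => destruct (plugS_lam_inj _ _ _ _ Hx) end; subst.
        exists (plugS s (ren (hg (length s)) T)); split; apply J_refl.
    + match goal with Hx : cc _ T _ |- _ => rename Hx into Ht end.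
      exists (plugS s (ren (hg (length s)) a')). split.
      * apply J_one. apply cc_plugS. apply cc_ren; auto.
      * apply J_one. constructor. constructor. intro Hx. apply H. eapply cc_occurs_back; eauto.
    + match goal with Hx : cc _ (plugS _ _) _ |- _ =>
        destruct (L_gen _ _ _ _ Hx) as [s' [g [E [Hg F]]]] end; subst.
      exists (plugS s' (ren (hg (length s')) T)). split.
      * apply J_one.
        replace (ren (hg (length s')) T) with (ren g (ren (hg (length s)) T)).
        -- apply F. intros n Hn Hl. destruct (occurs_ren _ _ _ Hn) as [m [_ E]]. unfold hg in E. lia.
        -- rewrite ren_comp. apply ren_ext_occ. intros [|m] Hm; [contradiction|].
           unfold hg; simpl. apply Hg.
      * apply J_one. simpl. constructor. constructor. auto.
Qed.
Lemma J_swap : forall k1 k2 b c, (exists d, J k2 k1 c d /\ J k1 k2 b d) -> exists d, J k1 k2 b d /\ J k2 k1 c d.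
Proof. intros k1 k2 b c [d [A B]]; eauto. Qed.

Lemma pair : forall k1 a b, cc k1 a b -> forall k2 c, cc k2 a c ->
  exists d, J k1 k2 b d /\ J k2 k1 c d.
Proof.
  induction 1; intros k2 c Hc.
  - eapply root_inside; eauto.
  - inversion Hc; subst.
    + apply J_swap. eapply root_inside; eauto. apply cc_appl; auto.
    + destruct (IHcc _ _ H3) as [d [A B]]. exists (App d b). split.
      * refine (J_map _ _ (fun x => App x b) _ _ _ A). intros; apply cc_appl; auto.
      * refine (J_map _ _ (fun x => App x b) _ _ _ B). intros; apply cc_appl; auto.
    + exists (App a' b'). split; apply J_one; [apply cc_appr|apply cc_appl]; auto.
  - inversion Hc; subst.
    + apply J_swap. eapply root_inside; eauto. apply cc_appr; auto.
    + exists (App a' b'). split; apply J_one; [apply cc_appl|apply cc_appr]; auto.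
    + destruct (IHcc _ _ H3) as [d [A B]]. exists (App a d). split.
      * refine (J_map _ _ (fun x => App a x) _ _ _ A). intros; apply cc_appr; auto.
      * refine (J_map _ _ (fun x => App a x) _ _ _ B). intros; apply cc_appr; auto.
  - inversion Hc; subst.
    + apply J_swap. eapply root_inside; eauto. apply cc_esl; auto.
    + destruct (IHcc _ _ H3) as [d [A B]]. exists (ES d b). split.
      * refine (J_map _ _ (fun x => ES x b) _ _ _ A). intros; apply cc_esl; auto.
      * refine (J_map _ _ (fun x => ES x b) _ _ _ B). intros; apply cc_esl; auto.
    + exists (ES a' b'). split; apply J_one; [apply cc_esr|apply cc_esl]; auto.
  - inversion Hc; subst.
    + apply J_swap. eapply root_inside; eauto. apply cc_esr; auto.
    + exists (ES a' b'). split; apply J_one; [apply cc_esl|apply cc_esr]; auto.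
    + destruct (IHcc _ _ H3) as [d [A B]]. exists (ES a d). split.
      * refine (J_map _ _ (fun x => ES a x) _ _ _ A). intros; apply cc_esr; auto.
      * refine (J_map _ _ (fun x => ES a x) _ _ _ B). intros; apply cc_esr; auto.
Qed.
Definition scons (c : nat) (rho : nat -> nat) : nat -> nat :=
  fun n => match n with 0 => c | S m => rho m end.

Fixpoint w (rho : nat -> nat) (t : term) : nat :=
  match t with
  | Var n => rho n
  | Lam _ => 0
  | App a b => w rho a + w rho b
  | ES a b => w (scons (S (w rho b)) rho) a + w rho b
  end.

Lemma w_ext : forall t r1 r2, (forall n, r1 n = r2 n) -> w r1 t = w r2 t.
Proof.
  induction t; intros r1 r2 H; simpl; auto.
  assert (E : w r1 t2 = w r2 t2) by auto. rewrite E. f_equal. apply IHt1. intros [|n]; simpl; auto.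
Qed.

Lemma w_mono : forall t r1 r2, (forall n, r1 n <= r2 n) -> w r1 t <= w r2 t.
Proof.
  induction t; intros r1 r2 H; simpl; auto.
  - specialize (IHt1 r1 r2 H); specialize (IHt2 r1 r2 H); lia.
  - assert (E : w r1 t2 <= w r2 t2) by auto.
    assert (w (scons (S (w r1 t2)) r1) t1 <= w (scons (S (w r2 t2)) r2) t1).
    { apply IHt1. intros [|n]; simpl; auto. lia. } lia.
Qed.

Lemma w_ren : forall t rho f, w rho (ren f t) = w (fun n => rho (f n)) t.
Proof.
  induction t; intros rho f; simpl; auto.
  rewrite IHt1, IHt2. f_equal. apply w_ext. intros [|n]; simpl; auto.
Qed.

Lemma occ_w : forall k r T T', occ1 k r T T' -> forall rho, w rho r < rho k -> w rho T' < w rho T.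
Proof.
  induction 1; intros rho Hr; simpl; auto.
  - specialize (IHocc1 rho Hr); lia.
  - specialize (IHocc1 rho Hr); lia.
  - assert (w (scons (S (w rho u)) rho) t' < w (scons (S (w rho u)) rho) t); [|lia].
    apply IHocc1. rewrite w_ren. simpl. rewrite (w_ext r (fun n => rho n) rho) by auto. auto.
  - specialize (IHocc1 rho Hr).
    assert (w (scons (S (w rho u')) rho) t <= w (scons (S (w rho u)) rho) t); [|lia].
    apply w_mono. intros [|n]; simpl; lia.
Qed.

Lemma cc_e_dec : forall t t', cc Ke t t' -> forall rho, w rho t' < w rho t.
Proof.
  induction 1; intros rho; simpl.
  - inversion H; subst. simpl.
    assert (w (scons (S (w rho u)) rho) t'0 < w (scons (S (w rho u)) rho) t0); [|lia].
    eapply occ_w; eauto. rewrite w_ren. simpl. rewrite (w_ext u (fun n => rho n) rho) by auto. auto.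
  - specialize (IHcc rho); lia.
  - specialize (IHcc rho); lia.
  - specialize (IHcc (scons (S (w rho b)) rho)); lia.
  - specialize (IHcc rho).
    assert (w (scons (S (w rho b')) rho) a <= w (scons (S (w rho b)) rho) a); [|lia].
    apply w_mono. intros [|n]; simpl; lia.
Qed.
Definition confl {A} (R : A -> A -> Prop) : Prop :=
  forall a b c, star R a b -> star R a c -> exists d, star R b d /\ star R c d.

Lemma newman {A} (R : A -> A -> Prop) (m : A -> nat) :
  (forall a b, R a b -> m b < m a) ->
  (forall a b c, R a b -> R a c -> exists d, star R b d /\ star R c d) -> confl R.
Proof.
  intros Hdec Hlc.
  assert (G : forall n a, m a < n -> forall b c, star R a b -> star R a c -> exists d, star R b d /\ star R c d).
  { induction n; intros a Ha b c Hb Hc; [lia|].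
    destruct Hb as [a|a b1 b Hab1 Hb1b].
    - exists c; split; auto; constructor.
    - destruct Hc as [a|a c1 c Hac1 Hc1c].
      + exists b; split; [constructor|]. econstructor; eauto.
      + destruct (Hlc _ _ _ Hab1 Hac1) as [d0 [B1 C1]].
        pose proof (Hdec _ _ Hab1); pose proof (Hdec _ _ Hac1).
        destruct (IHn b1 ltac:(lia) _ _ Hb1b B1) as [e1 [E1 E2]].
        destruct (IHn c1 ltac:(lia) _ _ Hc1c (star_trans _ _ _ _ C1 E2)) as [f [F1 F2]].
        exists f; split; auto. eapply star_trans; eauto. }
  intros a b c; apply (G (S (m a))); lia.
Qed.

Lemma diamond_confl {A} (Q : A -> A -> Prop) :
  (forall a b c, Q a b -> Q a c -> exists d, Q b d /\ Q c d) -> confl Q.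
Proof.
  intros Hd.
  assert (strip : forall a c, star Q a c -> forall b, Q a b -> exists d, star Q b d /\ Q c d).
  { induction 1; intros b Hb.
    - exists b; split; auto; constructor.
    - destruct (Hd _ _ _ Hb H) as [d1 [A1 B1]].
      destruct (IHstar _ B1) as [d [C D]]. exists d; split; auto. econstructor; eauto. }
  intros a b c Hb; revert c. induction Hb; intros c Hc.
  - exists c; split; auto; constructor.
  - destruct (strip _ _ Hc _ H) as [d1 [A1 B1]].
    destruct (IHHb _ A1) as [d [C D]]. exists d; split; auto. econstructor; eauto.
Qed.

Lemma hindley {A} (R1 R2 : A -> A -> Prop) :
  (forall a b c, R1 a b -> R2 a c -> exists d, star R2 b d /\ opt R1 c d) ->
  forall a b c, star R1 a b -> star R2 a c -> exists d, star R2 b d /\ star R1 c d.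
Proof.
  intros H.
  assert (strip : forall a c, star R2 a c -> forall b, R1 a b -> exists d, star R2 b d /\ opt R1 c d).
  { induction 1; intros b Hb.
    - exists b; split; [constructor|right; auto].
    - destruct (H _ _ _ Hb H0) as [d1 [A1 [E|B1]]].
      + subst. exists z; split; [eapply star_trans; eauto|left; auto].
      + destruct (IHstar _ B1) as [d [C D]]. exists d; split; auto. eapply star_trans; eauto. }
  intros a b c Hb; revert c. induction Hb; intros c Hc.
  - exists c; split; auto; constructor.
  - destruct (strip _ _ Hc _ H0) as [d1 [A1 B1]].
    destruct (IHHb _ A1) as [d [C D]]. exists d; split; auto.
    destruct B1 as [E|B1]; [subst; auto|econstructor; eauto].
Qed.

Definition union {A} (R1 R2 : A -> A -> Prop) x y := R1 x y \/ R2 x y.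

Lemma star_star_union {A} (R1 R2 : A -> A -> Prop) x y :
  star (union (star R1) (star R2)) x y <-> star (union R1 R2) x y.
Proof.
  split; induction 1; try constructor.
  - eapply star_trans; eauto. destruct H as [H|H].
    + apply (star_map R1 _ (fun x => x)); auto. intros; left; auto.
    + apply (star_map R2 _ (fun x => x)); auto. intros; right; auto.
  - destruct H as [H|H]; econstructor; eauto; [left|right]; apply star_one; auto.
Qed.

Lemma union_confl {A} (R1 R2 : A -> A -> Prop) :
  confl R1 -> confl R2 ->
  (forall a b c, star R1 a b -> star R2 a c -> exists d, star R2 b d /\ star R1 c d) ->
  confl (union R1 R2).
Proof.
  intros C1 C2 Cm.
  assert (D : confl (union (star R1) (star R2))).
  { apply diamond_confl. intros a b c [Hb|Hb] [Hc|Hc].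
    - destruct (C1 _ _ _ Hb Hc) as [d [? ?]]; exists d; split; left; auto.
    - destruct (Cm _ _ _ Hb Hc) as [d [? ?]]; exists d; split; [right|left]; auto.
    - destruct (Cm _ _ _ Hc Hb) as [d [? ?]]; exists d; split; [left|right]; auto.
    - destruct (C2 _ _ _ Hb Hc) as [d [? ?]]; exists d; split; right; auto. }
  intros a b c Hb Hc. apply star_star_union in Hb, Hc.
  destruct (D _ _ _ Hb Hc) as [d [? ?]]. exists d; split; apply star_star_union; auto.
Qed.

Lemma star_opt {A} (R : A -> A -> Prop) x y : star (opt R) x y <-> star R x y.
Proof.
  split; induction 1; try constructor.
  - destruct H as [E|H]; [subst; auto|econstructor; eauto].
  - econstructor; eauto. right; auto.
Qed.

Lemma confl_iff {A} (R R' : A -> A -> Prop) : (forall x y, R x y <-> R' x y) -> confl R -> confl R'.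
Proof.
  intros E C a b c Hb Hc.
  assert (M : forall x y, star R' x y -> star R x y).
  { intros x y H; apply (star_map R' R (fun x => x)); auto. intros; apply E; auto. }
  destruct (C _ _ _ (M _ _ Hb) (M _ _ Hc)) as [d [B D]].
  exists d; split; apply (star_map R R' (fun x => x)); auto; intros; apply E; auto.
Qed.

Lemma star_crt {A} (R : A -> A -> Prop) x y : clos_refl_trans A R x y <-> star R x y.
Proof.
  rewrite clos_rt_rt1n_iff. split; induction 1; econstructor; eauto.
Qed.

Lemma confl_confluent (R : term -> term -> Prop) : confl R -> confluent R.
Proof.
  intros C a b c Hb Hc. apply star_crt in Hb, Hc.
  destruct (C _ _ _ Hb Hc) as [d [? ?]]. exists d; split; apply star_crt; auto.
Qed.
Lemma e_confl : confl (cc Ke).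
Proof.
  apply (newman _ (w (fun _ => 0))).
  - intros; apply cc_e_dec; auto.
  - intros a b c Hb Hc. exact (pair _ _ _ Hb _ _ Hc).
Qed.

Definition SK (P : kind -> Prop) (x y : term) : Prop := exists k, P k /\ cc k x y.

Lemma J_nonE : forall k1 k2 x y, k1 <> Ke -> J k1 k2 x y -> opt (cc k2) x y.
Proof. destruct k1; simpl; intros; auto; congruence. Qed.

Lemma SK_confl : forall P, (forall k, P k -> k <> Ke) -> confl (SK P).
Proof.
  intros P HP.
  assert (D : confl (opt (SK P))).
  { apply diamond_confl. intros a b c [E|[k1 [P1 Hb]]] [E'|[k2 [P2 Hc]]]; subst.
    - exists c; split; left; auto.
    - exists c; split; [right; exists k2; auto|left; auto].
    - exists b; split; [left; auto|right; exists k1; auto].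
    - destruct (pair _ _ _ Hb _ _ Hc) as [d [A B]].
      apply J_nonE in A; [|auto]. apply J_nonE in B; [|auto].
      exists d; split.
      + destruct A as [A|A]; [left; auto|right; exists k2; auto].
      + destruct B as [B|B]; [left; auto|right; exists k1; auto]. }
  intros a b c Hb Hc. apply star_opt in Hb, Hc.
  destruct (D _ _ _ Hb Hc) as [d [? ?]]. exists d; split; apply star_opt; auto.
Qed.

Lemma main_confl : forall P, (forall k, P k -> k <> Ke) -> confl (union (cc Ke) (SK P)).
Proof.
  intros P HP. apply union_confl.
  - apply e_confl.
  - apply SK_confl; auto.
  - apply hindley. intros a b c Hb [k [Pk Hc]].
    destruct (pair _ _ _ Hb _ _ Hc) as [d [A B]]. exists d. split.
    + simpl in A. apply (star_map (cc k) _ (fun x => x)); auto. intros; exists k; auto.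
    + apply J_nonE in B; auto.
Qed.

Lemma root_m_iff : forall t t', root_m t t' <-> root Km t t'.
Proof.
  split; intros H; inversion H; subst.
  - rewrite lift0_ren. constructor.
  - rewrite <- lift0_ren. constructor.
Qed.

Lemma root_e_iff : forall t t', root_e t t' <-> root Ke t t'.
Proof.
  split; intros H; inversion H; subst.
  - constructor. pose proof (occ1_plugW_bw w0 0 (ren S u)) as B. simpl in B.
    rewrite lift0_ren. replace (ren (fun n => S (depth w0) + n) u) with (ren (fun n => depth w0 + n) (ren S u)); auto.
    rewrite ren_comp; apply ren_ext; intros; lia.
  - match goal with Hx : occ1 _ _ _ _ |- _ => destruct (occ1_plugW_fw _ _ _ _ Hx) as [w0 [E1 E2]] end; subst. simpl.
    replace (ren (fun n => depth w0 + n) (ren S u)) with (lift (S (depth w0)) 0 u).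
    + constructor.
    + rewrite lift0_ren, ren_comp; apply ren_ext; intros; lia.
Qed.

Lemma root_g_iff : forall t t', root_gcv t t' <-> root Kg t t'.
Proof.
  split; intros H; inversion H; subst.
  - rewrite !lift0_ren. replace (ren (fun n => 1 + n) t0) with (ren S t0) by (apply ren_ext; auto).
    rewrite <- ren_hg_S. constructor. intro Hc. destruct (occurs_ren _ _ _ Hc) as [m [_ E]]; discriminate.
  - assert (E : T = lift 1 0 (ren pred T)).
    { rewrite lift0_ren, ren_comp. rewrite <- (ren_id T) at 1. apply ren_ext_occ.
      intros [|n] Hn; [contradiction|]. simpl. lia. }
    replace (ren (hg (length s)) T) with (lift (length s) 0 (ren pred T)).
    + rewrite E at 1. constructor.
    + rewrite lift0_ren, ren_comp. apply ren_ext_occ. intros [|n] Hn; [contradiction|]. unfold hg; simpl; lia.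
Qed.

Lemma wclos_cc : forall (R : term -> term -> Prop) k, (forall x y, R x y <-> root k x y) ->
  forall x y, wclos R x y <-> cc k x y.
Proof.
  intros R k HR x y; split; intros H.
  - destruct H. apply cc_plugW. constructor. apply HR; auto.
  - induction H.
    + apply (WClos R Hole). apply HR; auto.
    + destruct IHcc. apply (WClos R (WAppL w0 b)); auto.
    + destruct IHcc. apply (WClos R (WAppR a w0)); auto.
    + destruct IHcc. apply (WClos R (WESL w0 b)); auto.
    + destruct IHcc. apply (WClos R (WESR a w0)); auto.
Qed.

Theorem theorem4p8 : confluent step_w /\ confluent step_wngcv.
Proof.
  pose proof (wclos_cc _ _ root_m_iff) as Em.
  pose proof (wclos_cc _ _ root_e_iff) as Ee.
  pose proof (wclos_cc _ _ root_g_iff) as Eg.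
  split; apply confl_confluent.
  - apply (confl_iff (union (cc Ke) (SK (fun k => k = Km \/ k = Kg)))).
    + intros x y. unfold step_w, step_wm, step_we, step_wgcv, union, SK. rewrite Em, Ee, Eg.
      split.
      * intros [H|[k [[E|E] H]]]; subst; auto.
      * intros [H|[H|H]]; [right; exists Km; auto|left; auto|right; exists Kg; auto].
    + apply main_confl. intros k [E|E]; subst; discriminate.
  - apply (confl_iff (union (cc Ke) (SK (fun k => k = Km)))).
    + intros x y. unfold step_wngcv, step_wm, step_we, union, SK. rewrite Em, Ee.
      split.
      * intros [H|[k [E H]]]; subst; auto.
      * intros [H|H]; [right; exists Km; auto|left; auto].
    + apply main_confl. intros k E; subst; discriminate.
Qed.
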